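(* The detour sequence of every unicyclic graph is full; that is, if $G$ is a connected graph containing exactly one cycle and $d_1\le d_2\le \cdots\le d_n$ is its detour sequence, then every integer $k$ with $d_1\le k\le d_n$ equals some $d_j$.
   Context: All graphs are finite and simple. A unicyclic graph is a connected graph with exactly one cycle. The order of a path is its number of vertices. For a vertex $v$ of $G$, $\tau(v)$ is the order of a longest path in $G$ having $v$ as an endvertex. The detour sequence of $G$ is the nondecreasing sequence of the values $\tau(v)$, $v\in V(G)$ (one term per vertex). *)

(* Defs.v *)
From mathcomp Require Import all_boot.
Set Implicit Arguments. Unset Strict Implicit. Unset Printing Implicit Defensive.

Definition simple_graph (T : finType) (e : rel T) : Prop :=
  symmetric e /\ irreflexive e.

Definition connected_graph (T : finType) (e : rel T) : Prop :=
  forall x y : T, connect e x y.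

(* A path with vertex sequence x :: p: consecutive vertices adjacent,
   all vertices distinct. Its order is size p + 1. *)
Definition is_path (T : finType) (e : rel T) (x : T) (p : seq T) : bool :=
  path e x p && uniq (x :: p).

(* tau v: the order of a longest path having v as an endvertex.
   Paths have at most #|T| vertices, so the maximum is over p with size < #|T|;
   we range over all tuples of length < #|T|. *)
Definition tau (T : finType) (e : rel T) (v : T) : nat :=
  \max_(n < #|T|) \max_(p : n.-tuple T | is_path e v p) n.+1.

Definition cycle_edges (T : finType) (c : seq T) : {set {set T}} :=
  [set [set x; y] | x in c, y in c & (next c x == y)].

Definition is_cycle (T : finType) (e : rel T) (c : seq T) : bool :=
  (2 < size c) && ucycleb e c.

(* Exactly one cycle: a cycle exists and any two cycles (as subgraphs, i.e.
   determined by their edge sets) coincide. *)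
Definition unicyclic (T : finType) (e : rel T) : Prop :=
  simple_graph e /\ connected_graph e /\
  (exists c, is_cycle e c) /\
  (forall c1 c2, is_cycle e c1 -> is_cycle e c2 ->
     cycle_edges c1 = cycle_edges c2).

Definition detour_seq (T : finType) (e : rel T) : seq nat :=
  sort leq [seq tau e v | v <- enum T].

(* Main.v *)
Require Import Defs.
From mathcomp Require Import all_boot zify.
Set Implicit Arguments. Unset Strict Implicit. Unset Printing Implicit Defensive.

Section Tau.
Variables (T : finType) (e : rel T).

Lemma path_size v p : is_path e v p -> size p < #|T|.
Proof.
case/andP=> _ /card_uniqP Hc.
have := max_card (mem (v :: p)). rewrite Hc /=. by [].
Qed.

Lemma tau_ge v p : is_path e v p -> size p + 1 <= tau e v.
Proof.
move=> H. have Hs := path_size H.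
rewrite /tau.
apply: leq_trans (leq_bigmax_cond (Ordinal Hs) isT).
rewrite addn1.
exact: (@leq_bigmax_cond _ (fun q : (size p).-tuple T => is_path e v q)
          (fun _ => (size p).+1) (in_tuple p) H).
Qed.

Lemma tau_ex v : exists p, is_path e v p /\ size p + 1 = tau e v.
Proof.
have H0 : is_path e v [::] by [].
have Hge := tau_ge H0.
have Hc : 0 < #|'I_#|T| |.
  by rewrite card_ord; apply: leq_ltn_trans (path_size H0).
case: (eq_bigmax (fun n : 'I_#|T| => \max_(p : n.-tuple T | is_path e v p) n.+1) Hc) => i0 Hi0.
rewrite /tau Hi0 in Hge *.
case: (boolP [exists p : i0.-tuple T, is_path e v p]) => [/existsP [p Hp]|Hn].
  have Hcard : 0 < #|(fun q : i0.-tuple T => is_path e v q)|.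
    by apply/card_gt0P; exists p.
  case: (eq_bigmax_cond (fun _ : i0.-tuple T => i0.+1) Hcard) => q Hq Hq'.
  exists q; split=> //. rewrite Hq' size_tuple addn1 //.
exfalso.
rewrite big_pred0 in Hge => // q.
by apply/negP => Hq; move/existsP: Hn; apply; exists q.
Qed.

Lemma tau_rev v p : symmetric e -> is_path e v p -> size p + 1 <= tau e (last v p).
Proof.
move=> Hsym /andP [Hp Hu].
have -> : size p = size (rev (belast v p)) by rewrite size_rev size_belast.
apply: tau_ge; apply/andP; split.
  rewrite rev_path. by rewrite (eq_path (e' := e)) // => x y; rewrite Hsym.
by rewrite -rev_rcons rev_uniq -lastI.
Qed.

Lemma ivt (f : T -> nat) k x p : path e x p -> f x <= k <= f (last x p) ->
  (exists y, y \in x :: p /\ f y = k) \/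
  (exists u v, [/\ e u v, u \in x :: p, v \in p, f u < k & k < f v]).
Proof.
elim: p x => [|y p IH] x /=.
  move=> _ H. left; exists x; split; [exact: mem_head|lia].
case/andP=> Hxy Hp /andP [H1 H2].
case: (ltngtP (f x) k) => Hx; [| lia | by left; exists x; rewrite mem_head].
case: (leqP (f y) k) => Hy.
  case: (IH y Hp) => [|[z [Hz Hfz]]|[u [w [Hu1 Hu2 Hu3 Hu4 Hu5]]]].
  + by rewrite Hy.
  + by left; exists z; rewrite inE Hz orbT.
  + right; exists u, w; split=> //; first by rewrite inE Hu2 orbT.
    by rewrite inE Hu3 orbT.
right; exists x, y; split=> //; [exact: mem_head|exact: mem_head].
Qed.

Lemma jump_cycle x y : simple_graph e -> e x y -> tau e x + 2 <= tau e y ->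
  exists p1 p2, [/\ is_path e y (p1 ++ x :: p2), size (p1 ++ x :: p2) + 1 = tau e y
                  & is_cycle e (rcons (y :: p1) x)].
Proof.
move=> [Hsym Hirr] Hxy Hj.
case: (tau_ex y) => q [/andP [Hq Hu] Hsz].
case: (boolP (x \in q)) => Hxq; last first.
  have Hxy' : x != y by apply/eqP => Exy; rewrite Exy Hirr in Hxy.
  have : is_path e x (y :: q).
    apply/andP; split; first by rewrite /= Hxy Hq.
    by rewrite cons_uniq inE negb_or Hxy' Hxq Hu.
  move/tau_ge => /=. lia.
case/splitPr: Hxq Hq Hu Hsz => p1 p2 Hq Hu Hsz.
case: p1 Hq Hu Hsz => [|a p1] Hq Hu Hsz.
  have : is_path e x p2.
    rewrite /is_path; move: Hq Hu => /= /andP [_ ->] /andP [_ ->] //.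
  move/tau_ge => /=. move: Hsz => /=. lia.
exists (a :: p1), p2; split=> //; first by rewrite /is_path Hq Hu.
apply/andP; split; first by rewrite size_rcons.
apply/andP; split.
  rewrite /= rcons_path. move: Hq. rewrite cat_path => /andP [H1 /andP [H2 _]].
  move: H1 H2 => /= /andP [-> H1] H2.
  by rewrite rcons_path H1 H2 last_rcons Hxy.
move: Hu. rewrite -cat_cons cat_uniq rcons_uniq => /and3P [U1 U2 _].
rewrite U1 andbT. move: U2 => /=. by case: (x \in _).
Qed.
End Tau.

Lemma cycle_vert (T : finType) (c1 c2 : seq T) z :
  cycle_edges c1 = cycle_edges c2 -> z \in c1 -> z \in c2.
Proof.
move=> H Hz.
have : [set z; next c1 z] \in cycle_edges c1.
  apply/imset2P; exists z (next c1 z) => //.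
  by rewrite inE mem_next Hz eqxx.
rewrite H => /imset2P [x1 y1 Hx1 Hy1 Heq].
have : z \in [set z; next c1 z] by rewrite set21.
rewrite Heq in_set2 => /orP [/eqP ->|/eqP ->] //.
by move: Hy1; rewrite inE => /andP [].
Qed.

Lemma jump_in_cycle (T : finType) (e : rel T) x y c : unicyclic e ->
  e x y -> tau e x + 2 <= tau e y -> is_cycle e c -> y \in c.
Proof.
move=> [Hs [Hcon [_ Huni]]] Hxy Hj Hc.
case: (jump_cycle Hs Hxy Hj) => p1 [p2 [_ _ Hc']].
apply: (cycle_vert (Huni _ _ Hc' Hc)).
by rewrite /= mem_head.
Qed.


Theorem theorem1p21 (T : finType) (e : rel T) :
  unicyclic e ->
  let d := detour_seq e in
  forall k : nat, nth 0 d 0 <= k <= nth 0 d (size d).-1 ->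
    exists j, j < size d /\ nth 0 d j = k.
Proof.
move=> Hun d k /andP [Hk1 Hk2].
have Hun' := Hun.
move: Hun' => [Hs [Hcon [[c0 Hc0] Huni]]].
have Hsd : size d = #|T| by rewrite /d /detour_seq size_sort size_map -cardE.
have HT : 0 < #|T|.
  case: c0 Hc0 => [|x0 c] //= _. by apply/card_gt0P; exists x0.
suff [v Hv] : exists v, tau e v = k.
  have Hkd : k \in d by rewrite /d /detour_seq mem_sort -Hv map_f // mem_enum.
  by exists (index k d); rewrite index_mem nth_index.
have Hmem : forall i, i < size d -> exists w, tau e w = nth 0 d i.
  move=> i Hi. have := mem_nth 0 Hi.
  rewrite /d /detour_seq mem_sort => /mapP [w _ ->]. by exists w.
case: (Hmem 0); first by rewrite Hsd.
move=> w Hw.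
case: (Hmem (size d).-1); first by rewrite Hsd; lia.
move=> z Hz.
case/connectP: (Hcon w z) => p Hp Hzl.
case: (ivt (f := tau e) (k := k) Hp); first by rewrite -Hzl Hw Hz Hk1 Hk2.
  by move=> [y [_ Hy]]; exists y.
move=> [u [v [Huv _ _ Hu1 Hu2]]].
have Hj : tau e u + 2 <= tau e v by lia.
case: (jump_cycle Hs Huv Hj) => p1 [p2 [Hpath Hsz Hc']].
have Hp2 : path e u p2.
  by move: Hpath => /andP [+ _]; rewrite cat_path => /andP [_ /= /andP [_ ->]].
have Hlast := tau_rev Hs.1 Hpath.
rewrite last_cat /= Hsz in Hlast.
case: (ivt (f := tau e) (k := k) Hp2); first by apply/andP; split; lia.
  by move=> [y [_ Hy]]; exists y.
move=> [u' [v' [Huv' _ Hv' Hu1' Hu2']]].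
have Hj' : tau e u' + 2 <= tau e v' by lia.
have Hin := jump_in_cycle Hun Huv' Hj' Hc'.
move: Hpath => /andP [_]. rewrite -cat_cons -cat_rcons cat_uniq => /and3P [_ Hh _].
exfalso; move/hasP: Hh; apply; by exists v'.
Qed.
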